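(* Let $s,t,q,N$ be integers with $0\le s<q$, $1\le t<q$, $N\ge0$, $t\nmid q$ and $\gcd(t,q)=g>1$. Put $\tilde t=t/g$, $\tilde q=q/g$, and write $s=\overline s g+s_g$ ($0\le s_g<g$), $\overline s=\overline{\overline s}\tilde t+\hat{\hat s}$ ($0\le\hat{\hat s}<\tilde t$), $\tilde q=\overline{\overline q}\tilde t+\hat{\hat q}$ ($1\le\hat{\hat q}<\tilde t$). Let $S^+(s,t,q,N)=\sum_{k=0}^N\lfloor(s+kt)/q\rfloor$, $M=\lfloor(s+Nt)/q\rfloor$, $x_M=(Mq-s)/t$, $S=\lfloor q/t\rfloor\frac{M(M-1)}2+M(N-\lceil x_M\rceil+1)$, $H=\{k\in\mathbb N:(\hat{\hat s}-k\hat{\hat q})\bmod\tilde t<\hat{\hat q}\}$, $J=H\cap\{0,\dots,\tilde t-1\}=\{j_0<\dots<j_{\hat{\hat q}-1}\}$, and $S_K=\sum_{k\in K}k$. Then: (a) if $j_0\ge M$, $S^+(s,t,q,N)=S$; (b.1) if $j_0<M\le j_{\hat{\hat q}-1}$, $S^+(s,t,q,N)=S+S_K$ with $K=H\cap\{0,\dots,M-1\}$; (b.2) if $j_{\hat{\hat q}-1}<M$ and $j_0+\tilde t\ge M$, $S^+(s,t,q,N)=S+S_J$; (b.3) if $j_{\hat{\hat q}-1}<M$ and $j_0+\tilde t<M$, with $u=\lfloor(M-1)/\tilde t\rfloor$ and $K=H\cap\{u\tilde t,\dots,M-1\}$, $S^+(s,t,q,N)=S+uS_J+\hat{\hat q}\,\tilde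 t\frac{(u-1)u}2+S_K$.
   Context: Here $r\bmod \tilde t$ denotes the representative of $r$ in $\{0,\dots,\tilde t-1\}$. *)

(* Defs.v *)
From HB Require Import structures.
From mathcomp Require Import all_boot all_order all_algebra.
Set Implicit Arguments. Unset Strict Implicit. Unset Printing Implicit Defensive.
Import Order.TTheory GRing.Theory Num.Theory.

Definition gg (t q : nat) : nat := gcdn t q.
Definition tt (t q : nat) : nat := t %/ gg t q.
Definition qt (t q : nat) : nat := q %/ gg t q.
Definition sbar (s t q : nat) : nat := s %/ gg t q.
Definition shh (s t q : nat) : nat := sbar s t q %% tt t q.
Definition qhh (t q : nat) : nat := qt t q %% tt t q.

Definition Splus (s t q N : nat) : nat := \sum_(0 <= k < N.+1) ((s + k * t) %/ q).
Definition MM (s t q N : nat) : nat := (s + N * t) %/ q.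
Definition xM (s t q N : nat) : rat :=
  (((MM s t q N * q)%:R - s%:R) / t%:R)%R.
Definition SS (s t q N : nat) : int :=
  let M := MM s t q N in
  (((q %/ t) * ((M * (M - 1)) %/ 2))%:Z + M%:Z * (N%:Z - Num.ceil (xM s t q N) + 1))%R.

Definition inH (s t q : nat) (k : nat) : bool :=
  ((((shh s t q)%:Z - k%:Z * (qhh t q)%:Z) %% (tt t q)%:Z)%Z < (qhh t q)%:Z)%R.
Definition JJ (s t q : nat) : seq nat := [seq k <- iota 0 (tt t q) | inH s t q k].
Definition j0 (s t q : nat) : nat := head 0 (JJ s t q).
Definition jlast (s t q : nat) : nat := last 0 (JJ s t q).
Definition SJ (s t q : nat) : nat := \sum_(k <- JJ s t q) k.

(* Main.v *)
Require Import Defs.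
From HB Require Import structures.
From mathcomp Require Import all_boot all_order all_algebra.
From mathcomp Require Import zify ring lra.
Import Order.TTheory GRing.Theory Num.Theory.
Set Implicit Arguments. Unset Strict Implicit.

Local Open Scope ring_scope.

Lemma ceil_divz (a : int) (t : nat) : (0 < t)%N ->
  Num.ceil ((a%:~R : rat) / t%:R) = - ((- a) %/ t%:Z)%Z.
Proof.
move=> t0; rewrite ceilNfloor; congr (- _).
have tq : (0 : rat) < t%:R by rewrite ltr0n.
apply: floor_def; rewrite -mulNr -rmorphN /=.
rewrite ler_pdivlMr // ltr_pdivrMr //.
have -> : (t%:R : rat) = (t%:Z)%:~R by [].
rewrite -!intrM ler_int ltr_int lez_floor ?ltz_ceil //.
by case: (t) t0.
Qed.

Definition cc (s t q : nat) (m : nat) : int := - ((s%:Z - (m*q)%:Z) %/ t%:Z)%Z.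

Lemma cc_eq s t q N m : (0 < t)%N -> (0 < q)%N ->
  (MM s t q N < m)%N -> (m <= MM s t q N.+1)%N -> cc s t q m = N.+1%:Z.
Proof.
move=> t0 q0; rewrite /MM ltn_divLR // leq_divRL // => h1 h2.
rewrite /cc.
have -> : s%:Z - (m * q)%:Z = (- N.+1%:Z) * t%:Z + (s + N.+1 * t - m * q)%N%:Z.
  rewrite -(subzn h2) !PoszD !PoszM; ring.
rewrite divzMDl; last by case: (t) t0.
rewrite divz_small ?addr0 ?opprK //.
apply/andP; split => //. rewrite absz_nat ltz_nat. lia.
Qed.

Lemma MM_mono s t q N : (MM s t q N <= MM s t q N.+1)%N.
Proof. by rewrite /MM leq_div2r // leq_add2l leq_mul2r leqnSn orbT. Qed.

Lemma F1 s t q N : (0 < t)%N -> (s < q)%N ->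
  (Splus s t q N)%:Z = (MM s t q N * N.+1)%:Z - \sum_(1 <= m < (MM s t q N).+1) cc s t q m.
Proof.
move=> t0 sq; have q0 : (0 < q)%N by apply: leq_ltn_trans sq.
elim: N => [|N IH].
  rewrite /Splus /MM big_nat1 mul0n addn0 divn_small // big_geq //.
have -> : Splus s t q N.+1 = (Splus s t q N + MM s t q N.+1)%N.
  by rewrite /Splus big_nat_recr.
have hs : \sum_(1 <= m < (MM s t q N.+1).+1) cc s t q m =
   \sum_(1 <= m < (MM s t q N).+1) cc s t q m + \sum_((MM s t q N).+1 <= m < (MM s t q N.+1).+1) N.+1%:Z.
  rewrite (@big_cat_nat _ _ _ (MM s t q N).+1) //=; last exact: MM_mono.
  congr (_ + _); apply: eq_big_nat => i /andP[h1 h2]; by rewrite (cc_eq t0 q0 h1 h2).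
rewrite PoszD IH hs.
rewrite sumr_const_nat subSS.
have := MM_mono s t q N.
move: (MM s t q N) (MM s t q N.+1) => a b hab.
rewrite -[(N.+1%:Z) *+ _]mulr_natr natz -(subzn hab) !PoszM.
nia.
Qed.

Lemma divz_step (a : int) (t Q r : nat) : (0 < t)%N -> (r < t)%N ->
  (a %/ t)%Z - ((a - (Q * t + r)%N%:Z) %/ t)%Z
   = Q%:Z + (if (a %% t)%Z < r%:Z then 1 else 0).
Proof.
move=> t0 rt.
have tn0 : t%:Z != 0 by case: (t) t0.
have ha := divz_eq a t%:Z.
have m0 : 0 <= (a %% t)%Z by apply: modz_ge0.
have mt : (a %% t)%Z < t%:Z by apply: ltz_pmod; rewrite ltz_nat.
move: ha m0 mt; set m := (a %% t)%Z; set d := (a %/ t)%Z => ha m0 mt.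
case: ifP => h.
  have e : a - (Q * t + r)%N%:Z = (d - Q%:Z - 1) * t%:Z + (m - r%:Z + t%:Z).
    rewrite {1}ha PoszD PoszM; ring.
  rewrite e divzMDl // divz_small; last first.
    apply/andP; split; rewrite ?absz_nat; lia.
  ring.
have e : a - (Q * t + r)%N%:Z = (d - Q%:Z) * t%:Z + (m - r%:Z).
  rewrite {1}ha PoszD PoszM; ring.
rewrite e divzMDl // divz_small; last first.
  apply/andP; split; rewrite ?absz_nat; lia.
ring.
Qed.

Lemma modpart (s t q k : nat) : (0 < t)%N ->
  (((s%:Z - (k * q)%N%:Z) %% t%:Z)%Z < (q %% t)%N%:Z) = inH s t q k.
Proof.
move=> t0.
rewrite /inH /shh /qhh /sbar /tt /qt /gg.
have g0 : (0 < gcdn t q)%N by rewrite gcdn_gt0 t0.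
have et : t = ((t %/ gcdn t q) * gcdn t q)%N by rewrite divnK // dvdn_gcdl.
have eq : q = ((q %/ gcdn t q) * gcdn t q)%N by rewrite divnK // dvdn_gcdr.
move: et eq g0; set g := gcdn t q; set T := (t %/ g)%N; set Qt := (q %/ g)%N => et eq g0.
have T0 : (0 < T)%N by move: t0; rewrite et muln_gt0 => /andP[].
have es := divn_eq s g.
set sg := (s %% g)%N in es.
have sgg : (sg < g)%N by rewrite ltn_mod.
set sb := (s %/ g)%N in es *.
have esb := divn_eq sb T; have eqt := divn_eq Qt T.
set X : int := (sb %% T)%N%:Z - k%:Z * (Qt %% T)%N%:Z.
have Tn0 : T%:Z != 0 by case: (T) T0.
have hX := divz_eq X T%:Z.
have Y0 : 0 <= (X %% T)%Z by apply: modz_ge0.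
have YT : (X %% T)%Z < T%:Z by apply: ltz_pmod; rewrite ltz_nat.
move: hX Y0 YT; set Y := (X %% T)%Z; set D := (X %/ T)%Z => hX Y0 YT; clearbody Y D.
have ea : s%:Z - (k * q)%N%:Z =
   ((sb %/ T)%N%:Z - k%:Z * (Qt %/ T)%N%:Z + D) * t%:Z + (g%:Z * Y + sg%:Z).
  have -> : Y = X - D * T%:Z by rewrite hX; ring.
  rewrite /X.
  move: (sb %/ T)%N (sb %% T)%N esb (Qt %/ T)%N (Qt %% T)%N eqt => A B esb C E eqt.
  rewrite es eq et esb eqt !PoszD !PoszM; ring.
rewrite ea modzMDl modz_small; last first.
  apply/andP; split.
    apply: addr_ge0; last by [].
    by apply: mulr_ge0.
  rewrite et PoszM.
  have h1 : g%:Z * Y + sg%:Z < g%:Z * (Y + 1).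
    by rewrite mulrDr mulr1 ltrD2l ltz_nat.
  apply: (lt_le_trans h1); rewrite mulrC ler_wpM2r // lezD1 //.
have -> : (q %% t)%N = ((Qt %% T) * g)%N by rewrite {1}eq {1}et muln_modl.
rewrite PoszM; move: (Qt %% T)%N => E.
have gp : 0 < g%:Z by rewrite ltz_nat.
apply/idP/idP => h.
  rewrite -(ltr_pM2l gp) [g%:Z * E%:Z]mulrC; apply: le_lt_trans h; by rewrite lerDl.
have h1 : g%:Z * Y + sg%:Z < g%:Z * (Y + 1).
  by rewrite mulrDr mulr1 ltrD2l ltz_nat.
apply: (lt_le_trans h1); rewrite mulrC ler_wpM2r // lezD1 //.
Qed.

Lemma Kstep s t q k : (0 < t)%N ->
  cc s t q k.+1 - cc s t q k = (q %/ t)%N%:Z + (if inH s t q k then 1 else 0).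
Proof.
move=> t0; rewrite /cc.
have -> : s%:Z - (k.+1 * q)%N%:Z = (s%:Z - (k * q)%N%:Z) - (q %/ t * t + q %% t)%N%:Z.
  rewrite -divn_eq mulSn PoszD; ring.
rewrite opprK addrC divz_step ?ltn_mod // modpart //.
Qed.

Lemma half_step M : ((M.+1 * (M.+1 - 1)) %/ 2 = (M * (M - 1)) %/ 2 + M)%N.
Proof.
have -> : (M.+1 * (M.+1 - 1) = M * 2 + M * (M - 1))%N.
  case: M => [|n]. by []. by rewrite !subn1 /= -mulnDr add2n mulnC.
by rewrite divnMDl // addnC.
Qed.

Lemma Tsum s t q M : (0 < t)%N ->
  \sum_(1 <= m < M.+1) cc s t q m = M%:Z * cc s t q M
    - ((q %/ t) * ((M * (M - 1)) %/ 2))%N%:Z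
    - (\sum_(0 <= k < M | inH s t q k) k)%N%:Z.
Proof.
move=> t0; elim: M => [|M IH].
  by rewrite big_geq // big_geq // mul0r mul0n div0n muln0 !subr0.
rewrite (@big_nat_recr _ _ _ M.+1 1) //= IH.
have hK := Kstep s q M t0.
have -> : cc s t q M.+1 = cc s t q M + (q %/ t)%N%:Z + (if inH s t q M then 1 else 0).
  by rewrite -addrA -hK; ring.
have hs : (\sum_(0 <= k < M.+1 | inH s t q k) k = \sum_(0 <= k < M | inH s t q k) k + (if inH s t q M then M else 0))%N.
  by rewrite !(big_mkcond (inH s t q)) big_nat_recr.
rewrite half_step hs.
case: (inH s t q M); rewrite ?addn0 ?PoszD ?PoszM; ring.
Qed.

Lemma ceil_xM s t q N : (0 < t)%N -> Num.ceil (xM s t q N) = cc s t q (MM s t q N).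
Proof.
move=> t0; rewrite /xM /cc.
have -> : (((MM s t q N * q)%:R - s%:R) : rat) = ((((MM s t q N * q)%N%:Z - s%:Z))%:~R).
  by rewrite rmorphB.
by rewrite ceil_divz // opprB.
Qed.

Lemma main_id s t q N : (0 < t)%N -> (s < q)%N ->
  (Splus s t q N)%:Z = SS s t q N + (\sum_(0 <= k < MM s t q N | inH s t q k) k)%N%:Z.
Proof.
move=> t0 sq; rewrite F1 // Tsum // /SS ceil_xM //.
move: (MM s t q N) => M.
rewrite !PoszM; ring.
Qed.

Lemma tt_gt0 t q : (0 < t)%N -> (0 < tt t q)%N.
Proof.
move=> t0; rewrite /tt /gg divn_gt0 ?gcdn_gt0 ?t0 //.
by apply: dvdn_leq => //; apply: dvdn_gcdl.
Qed.

Lemma inH_period s t q k n : inH s t q (k + n * tt t q) = inH s t q k.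
Proof.
rewrite /inH.
have -> : ((shh s t q)%:Z - (k + n * tt t q)%N%:Z * (qhh t q)%:Z)
   = (- (n%:Z * (qhh t q)%:Z)) * (tt t q)%:Z + ((shh s t q)%:Z - k%:Z * (qhh t q)%:Z).
  rewrite PoszD PoszM; ring.
by rewrite modzMDl.
Qed.

Lemma count_H s t q : (0 < t)%N ->
  (\sum_(0 <= k < tt t q | inH s t q k) 1)%N = qhh t q.
Proof.
move=> t0.
have T0 := tt_gt0 q t0.
have g0 : (0 < gcdn t q)%N by rewrite gcdn_gt0 t0.
have et : t = (gcdn t q * tt t q)%N by rewrite /tt /gg mulnC divnK // dvdn_gcdl.
have eq : q = (gcdn t q * qt t q)%N by rewrite /qt /gg mulnC divnK // dvdn_gcdr.
have tel := @telescope_sumr_eq _ 0 (tt t q) (cc s t q)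
   (fun k => (q %/ t)%N%:Z + (if inH s t q k then 1 else 0)) (leq0n _)
   (fun k _ => esym (Kstep s q k t0)).
rewrite big_split /= sumr_const_nat subn0 in tel.
have hc : (\sum_(0 <= k < tt t q) (if inH s t q k then 1 else 0) : int)
        = (\sum_(0 <= k < tt t q | inH s t q k) 1)%N%:Z.
  rewrite (big_mkcond (inH s t q)) -natz natr_sum; apply: eq_bigr => i _; by case: (inH s t q i).
rewrite hc in tel.
have hT : cc s t q (tt t q) - cc s t q 0 = (qt t q)%:Z.
  rewrite /cc mul0n subr0.
  have -> : s%:Z - (tt t q * q)%N%:Z = (- (qt t q)%:Z) * t%:Z + s%:Z.
    have hh : (tt t q * q = qt t q * t)%N.
      by rewrite /tt /qt /gg !divn_mulAC ?dvdn_gcdl ?dvdn_gcdr // mulnC.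
    rewrite hh PoszM; ring.
  rewrite divzMDl; last by case: (t) t0.
  ring.
rewrite hT in tel.
have hQ : (q %/ t = qt t q %/ tt t q)%N by have := @divnMl (gcdn t q) (qt t q) (tt t q) g0; rewrite -eq -et.
apply/eqP; rewrite -eqz_nat; apply/eqP.
have e2 := divn_eq (qt t q) (tt t q).
rewrite /qhh.
move: tel; rewrite hQ -mulr_natr => tel.
have : ((qt t q %% tt t q)%N%:Z = (qt t q)%:Z - (qt t q %/ tt t q * tt t q)%N%:Z).
  by rewrite {2}e2 PoszD; ring.
move=> ->; rewrite -tel PoszM natz; ring.
Qed.

Lemma inH_mod s t q k : inH s t q k = inH s t q (k %% tt t q)%N.
Proof. by rewrite {1}(divn_eq k (tt t q)) addnC inH_period. Qed.

Lemma mem_JJ s t q k : (k \in JJ s t q) = (k < tt t q)%N && inH s t q k.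
Proof. by rewrite /JJ mem_filter mem_iota add0n andbC. Qed.

Lemma SJE s t q : SJ s t q = (\sum_(0 <= k < tt t q | inH s t q k) k)%N.
Proof. by rewrite /SJ /JJ big_filter /index_iota subn0. Qed.

Lemma JJ_sorted s t q : sorted leq (JJ s t q).
Proof. rewrite /JJ; apply: sorted_filter; [exact: leq_trans | exact: iota_sorted]. Qed.

Lemma sorted_last_ge (l : seq nat) x0 x : sorted leq l -> x \in l -> (x <= last x0 l)%N.
Proof.
elim: l x0 => [|a l IH] x0 //= hp; rewrite inE => /orP[/eqP ->|hx].
  have := order_path_min leq_trans hp => /allP ha.
  have := mem_last a l; rewrite inE => /orP[/eqP -> //|hl]; exact: ha.
exact: IH (path_sorted hp) hx.
Qed.

Lemma j0_le s t q x : x \in JJ s t q -> (j0 s t q <= x)%N.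
Proof.
rewrite /j0; have := JJ_sorted s t q; case: (JJ s t q) => [|a l] //= hp.
rewrite inE => /orP[/eqP -> //|hx].
by have := order_path_min leq_trans hp => /allP; apply.
Qed.

Lemma jlast_ge s t q x : x \in JJ s t q -> (x <= jlast s t q)%N.
Proof. by move=> hx; apply: sorted_last_ge (JJ_sorted s t q) hx. Qed.

Lemma in_JJ_mod s t q k : (0 < t)%N -> inH s t q k -> (k %% tt t q)%N \in JJ s t q.
Proof.
move=> t0 hk; rewrite mem_JJ ltn_mod tt_gt0 //= -inH_mod //.
Qed.

Lemma case_a s t q M : (0 < t)%N -> (M <= j0 s t q)%N ->
  (\sum_(0 <= k < M | inH s t q k) k)%N = 0%N.
Proof.
move=> t0 hM; rewrite big_nat_cond big_pred0 // => i.
apply/negP => /andP[/andP[_ iM] hi].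
have := j0_le (in_JJ_mod t0 hi).
have := leq_mod i (tt t q); lia.
Qed.

Lemma case_b2 s t q M : (0 < t)%N -> (jlast s t q < M)%N -> (M <= j0 s t q + tt t q)%N ->
  (\sum_(0 <= k < M | inH s t q k) k)%N = SJ s t q.
Proof.
move=> t0 h1 h2; rewrite SJE (@big_nat_widen _ _ _ 0 M (M + tt t q)) ?leq_addr //.
rewrite (@big_nat_widen _ _ _ 0 (tt t q) (M + tt t q)) ?leq_addl //.
apply: eq_bigl => k; case hk: (inH s t q k) => //=.
have T0 := tt_gt0 q t0.
case: (ltnP k (tt t q)) => kT.
  have : k \in JJ s t q by rewrite mem_JJ kT hk.
  move/jlast_ge => h; lia.
apply/negbTE; rewrite -leqNgt.
have := j0_le (in_JJ_mod t0 hk).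
have e := divn_eq k (tt t q).
have : (tt t q <= k %/ tt t q * tt t q)%N by rewrite leq_pmull // divn_gt0.
lia.
Qed.

Lemma blocks s t q u : (0 < t)%N ->
  (\sum_(0 <= k < u * tt t q | inH s t q k) k)%N
   = (u * SJ s t q + qhh t q * tt t q * (((u - 1) * u) %/ 2))%N.
Proof.
move=> t0; elim: u => [|u IH]; first by rewrite !mul0n big_geq // divn_small // muln0.
rewrite mulSn addnC (@big_cat_nat _ _ _ (u * tt t q)) //=; last by rewrite leq_addr.
rewrite IH.
have hb : (\sum_(u * tt t q <= k < u * tt t q + tt t q | inH s t q k) k
   = SJ s t q + u * tt t q * qhh t q)%N.
  rewrite -{1}[(u * tt t q)%N]add0n big_addn addKn.
  rewrite SJE -(count_H s q t0) big_distrr /= -big_split /=.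
  apply: eq_big => [i|i _]; first by rewrite inH_period.
  by rewrite muln1 addnC.
have hh : (((u.+1 - 1) * u.+1) %/ 2 = ((u - 1) * u) %/ 2 + u)%N.
  by rewrite mulnC half_step [(u * _)%N]mulnC.
rewrite hb hh mulSn !mulnDr; ring.
Qed.

Local Close Scope ring_scope.
Unset Implicit Arguments.

Theorem theorem10 (s t q N : nat) :
  s < q -> 1 <= t -> t < q -> ~~ (t %| q) -> 1 < gcdn t q ->
  let M := MM s t q N in
  let Sp := ((Splus s t q N)%:Z)%R in
  let S := SS s t q N in
  let ttl := tt t q in
  [/\ (M <= j0 s t q -> Sp = S),
      (j0 s t q < M <= jlast s t q ->
         Sp = (S + ((\sum_(0 <= k < M | inH s t q k) k)%N)%:Z)%R),
      (jlast s t q < M -> M <= j0 s t q + ttl ->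
         Sp = (S + (SJ s t q)%:Z)%R) &
      (jlast s t q < M -> j0 s t q + ttl < M ->
         let u := (M - 1) %/ ttl in
         Sp = (S + ((u * SJ s t q)%N)%:Z
                 + ((qhh t q * ttl * (((u - 1) * u) %/ 2))%N)%:Z
                 + ((\sum_(u * ttl <= k < M | inH s t q k) k)%N)%:Z)%R)].
Proof.
move=> sq t0 tq ndv g1 M Sp S ttl.
have hm := main_id N t0 sq.
split.
- by move=> h; rewrite /Sp hm case_a // GRing.addr0.
- by move=> _; exact: hm.
- by move=> h1 h2; rewrite /Sp hm case_b2.
move=> h1 h2 u.
rewrite /Sp hm -/M (@big_cat_nat _ _ _ (u * ttl)) //=; last first.
  by apply: leq_trans (leq_trunc_div _ _) (leq_subr _ _).
rewrite blocks // !PoszD !GRing.addrA.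
by [].
Qed.
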